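(* (1) If $\Psi \vdash \exists \alpha{:}\kappa.\,A \le^{+} B$ then $\Psi, \alpha{:}\kappa \vdash A \le^{+} B$. (2) If $\Psi \vdash A \le^{-} \forall \beta{:}\kappa.\,B$ then $\Psi, \beta{:}\kappa \vdash A \le^{-} B$.
   Context: Sorts are $\kappa \in \{\mathsf{type}, \mathbb{N}\}$. Index terms/monotypes $\tau, t$ are built from $\mathbf{1}$, universal variables $\alpha$, binary connectives $\tau_1 \oplus \tau_2$ with $\oplus \in \{\to, +, \times\}$ (sort $\mathsf{type}$), and $\mathsf{zero}$, $\mathsf{succ}(t)$ (sort $\mathbb{N}$); $\Psi \vdash t : \kappa$ means $t$ has sort $\kappa$ with its variables declared in $\Psi$. Types are $A, B ::= \mathbf{1} \mid \alpha \mid A \oplus B \mid \forall \alpha{:}\kappa.\,A \mid \exists \alpha{:}\kappa.\,A \mid P \supset A \mid A \wedge P \mid \mathsf{Vec}\ t\ A$ with propositions $P ::= t = t'$. A declarative context $\Psi$ is a list of declarations including universal variables $\alpha:\kappa$ (bound variables are assumed fresh for $\Psi$). A type is positive if headed by $\exists$, negative if headed by $\forall$; nonpos = not positive, nonneg = not negative. Declarative subtyping $\Psi \vdash A \le^{\pm} B$ is inductively defined by: (Refl) if $\Psi \vdash A\ \mathsf{type}$ and $A$ is nonpos and nonneg then $\Psi \vdash A \le^{\pm} A$; ($\forall$L) $\Psi \vdash \tau : \kappa$ and $\Psi \vdash [\tau/\alpha]A \le^- B$ give $\Psi \vdash \forall\alpha{:}\kappa.A \le^- B$; ($\forall$R)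 $\Psi, \beta{:}\kappa \vdash A \le^- B$ gives $\Psi \vdash A \le^- \forall\beta{:}\kappa.B$; ($\exists$L) $\Psi, \alpha{:}\kappa \vdash A \le^+ B$ gives $\Psi \vdash \exists\alpha{:}\kappa.A \le^+ B$; ($\exists$R) $\Psi \vdash \tau:\kappa$ and $\Psi \vdash A \le^+ [\tau/\beta]B$ give $\Psi \vdash A \le^+ \exists\beta{:}\kappa.B$; ($-{+}$) $\Psi \vdash A \le^- B$ with $A,B$ nonpos gives $\Psi \vdash A \le^+ B$; ($+{-}$) $\Psi \vdash A \le^+ B$ with $A,B$ nonneg gives $\Psi \vdash A \le^- B$. *)

(* Defs.v *)
From Stdlib Require Import List Arith.
Import ListNotations.

Inductive sort : Type := SType | SNat.

Inductive binop : Type := BArrow | BSum | BProd.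

(* One syntactic category for index terms / monotypes and types.
   Universal variables are de Bruijn indices (0 = most recently declared
   universal variable of the context). *)
Inductive tm : Type :=
| TUnit : tm
| TVar : nat -> tm
| TBin : binop -> tm -> tm -> tm
| TZero : tm
| TSucc : tm -> tm
| TAll : sort -> tm -> tm
| TEx : sort -> tm -> tm
| TImp : (tm * tm) -> tm -> tm       (* (t = t') ⊃ A *)
| TAnd : tm -> (tm * tm) -> tm       (* A ∧ (t = t') *)
| TVec : tm -> tm -> tm.

Fixpoint lift (d c : nat) (t : tm) : tm :=
  match t with
  | TUnit => TUnit
  | TVar n => if c <=? n then TVar (n + d) else TVar n
  | TBin o a b => TBin o (lift d c a) (lift d c b)
  | TZero => TZero
  | TSucc a => TSucc (lift d c a)
  | TAll k a => TAll k (lift d (S c) a)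
  | TEx k a => TEx k (lift d (S c) a)
  | TImp (p, q) a => TImp (lift d c p, lift d c q) (lift d c a)
  | TAnd a (p, q) => TAnd (lift d c a) (lift d c p, lift d c q)
  | TVec s a => TVec (lift d c s) (lift d c a)
  end.

Definition shift (t : tm) : tm := lift 1 0 t.

Fixpoint subst (k : nat) (s : tm) (t : tm) : tm :=
  match t with
  | TUnit => TUnit
  | TVar n =>
      if n <? k then TVar n
      else if n =? k then lift k 0 s
      else TVar (pred n)
  | TBin o a b => TBin o (subst k s a) (subst k s b)
  | TZero => TZero
  | TSucc a => TSucc (subst k s a)
  | TAll kk a => TAll kk (subst (S k) s a)
  | TEx kk a => TEx kk (subst (S k) s a)
  | TImp (p, q) a => TImp (subst k s p, subst k s q) (subst k s a)
  | TAnd a (p, q) => TAnd (subst k s a) (subst k s p, subst k s q)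
  | TVec u a => TVec (subst k s u) (subst k s a)
  end.

Definition open (tau A : tm) : tm := subst 0 tau A.

(* Declarations: universal variables alpha:kappa, and (for generality)
   term variables x:A.  Newest declaration at the head of the list. *)
Inductive decl : Type :=
| DUniv : sort -> decl
| DTm : tm -> decl.

Definition ctx := list decl.

(* sort of the n-th universal variable (term-variable declarations skipped) *)
Fixpoint lookup (n : nat) (G : ctx) : option sort :=
  match G with
  | [] => None
  | DTm _ :: G' => lookup n G'
  | DUniv k :: G' => match n with 0 => Some k | S m => lookup m G' end
  end.

Inductive sorting (G : ctx) : tm -> sort -> Prop :=
| So_Unit : sorting G TUnit SType
| So_Var : forall n k, lookup n G = Some k -> sorting G (TVar n) k
| So_Bin : forall o a b, sorting G a SType -> sorting G b SType ->
    sorting G (TBin o a b) SType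
| So_Zero : sorting G TZero SNat
| So_Succ : forall t, sorting G t SNat -> sorting G (TSucc t) SNat.

Definition prop_wf (G : ctx) (P : tm * tm) : Prop :=
  sorting G (fst P) SNat /\ sorting G (snd P) SNat.

Inductive wf_type (G : ctx) : tm -> Prop :=
| Wf_Unit : wf_type G TUnit
| Wf_Var : forall n, lookup n G = Some SType -> wf_type G (TVar n)
| Wf_Bin : forall o a b, wf_type G a -> wf_type G b -> wf_type G (TBin o a b)
| Wf_All : forall k a, wf_type (DUniv k :: G) a -> wf_type G (TAll k a)
| Wf_Ex : forall k a, wf_type (DUniv k :: G) a -> wf_type G (TEx k a)
| Wf_Imp : forall P a, prop_wf G P -> wf_type G a -> wf_type G (TImp P a)
| Wf_And : forall a P, wf_type G a -> prop_wf G P -> wf_type G (TAnd a P)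
| Wf_Vec : forall t a, sorting G t SNat -> wf_type G a -> wf_type G (TVec t a).

Definition positive (A : tm) : bool :=
  match A with TEx _ _ => true | _ => false end.
Definition negative (A : tm) : bool :=
  match A with TAll _ _ => true | _ => false end.
Definition nonpos (A : tm) : bool := negb (positive A).
Definition nonneg (A : tm) : bool := negb (negative A).

Inductive polarity : Type := Pos | Neg.

Inductive sub : ctx -> polarity -> tm -> tm -> Prop :=
| Sub_Refl : forall G p A,
    wf_type G A -> nonpos A = true -> nonneg A = true -> sub G p A A
| Sub_AllL : forall G k tau A B,
    sorting G tau k -> sub G Neg (open tau A) B -> sub G Neg (TAll k A) B
| Sub_AllR : forall G k A B,
    sub (DUniv k :: G) Neg (shift A) B -> sub G Neg A (TAll k B)
| Sub_ExL : forall G k A B,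
    sub (DUniv k :: G) Pos A (shift B) -> sub G Pos (TEx k A) B
| Sub_ExR : forall G k tau A B,
    sorting G tau k -> sub G Pos A (open tau B) -> sub G Pos A (TEx k B)
| Sub_NegPos : forall G A B,
    sub G Neg A B -> nonpos A = true -> nonpos B = true -> sub G Pos A B
| Sub_PosNeg : forall G A B,
    sub G Pos A B -> nonneg A = true -> nonneg B = true -> sub G Neg A B.

(* Main.v *)
Require Import Defs.
From Stdlib Require Import List Arith Lia.
Import ListNotations.

Lemma lift_lift : forall d k s j c1 c2, c1 = c2 + k -> j <= c2 ->
  lift d c1 (lift k j s) = lift k j (lift d c2 s).
Proof.
  intros d k. fix IH 1. intros s; destruct s; intros j c1 c2 E H; simpl; try reflexivity;
  try (destruct p as [p q]); simpl;
  try (rewrite ?(IH s1 j c1 c2), ?(IH s2 j c1 c2), ?(IH s j c1 c2), ?(IH p j c1 c2), ?(IH q j c1 c2),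
        ?(IH s (S j) (S c1) (S c2)), ?(IH s0 (S j) (S c1) (S c2)) by lia; reflexivity).
  destruct (Nat.leb_spec j n); simpl;
    destruct (Nat.leb_spec c2 n); simpl;
    repeat match goal with |- context [?a <=? ?b] => destruct (Nat.leb_spec a b) end;
    f_equal; lia.
Qed.

Lemma lift_subst : forall t k c s, k <= c ->
  lift 1 c (subst k s t) = subst k (lift 1 (c - k) s) (lift 1 (S c) t).
Proof.
  fix IH 1. intros t; destruct t; intros k c sv H; simpl; try reflexivity;
  try (destruct p as [p q]); simpl;
  try (rewrite ?(IH t1 k c sv), ?(IH t2 k c sv), ?(IH t k c sv), ?(IH p k c sv), ?(IH q k c sv) by lia; reflexivity).
  - cbn -[Nat.leb Nat.ltb Nat.eqb].
    repeat (match goal with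
      | |- context [?a <=? ?b] => destruct (Nat.leb_spec a b)
      | |- context [?a <? ?b] => destruct (Nat.ltb_spec a b)
      | |- context [?a =? ?b] => destruct (Nat.eqb_spec a b)
      | |- context [match ?n with 0 => _ | S _ => _ end] => destruct n
      end; cbn -[Nat.leb Nat.ltb Nat.eqb]);
    try (f_equal; lia); try lia; try (apply lift_lift; lia).
  - rewrite (IH t (S k) (S c)) by lia. reflexivity.
  - rewrite (IH t (S k) (S c)) by lia. reflexivity.
Qed.

Lemma shift_open : forall tau B,
  shift (open tau B) = open (shift tau) (lift 1 1 B).
Proof.
  intros. unfold shift, open. rewrite lift_subst by lia. reflexivity.
Qed.

Lemma sorting_weaken : forall G t k k', sorting G t k ->
  sorting (DUniv k' :: G) (shift t) k.
Proof.
  intros G t k k' H; induction H; unfold shift in *; simpl; try constructor; auto.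
  rewrite Nat.add_1_r. simpl. assumption.
Qed.

Theorem mainTheorem2 :
  (forall (G : ctx) (k : sort) (A B : tm),
      sub G Pos (TEx k A) B -> sub (cons (DUniv k) G) Pos A (shift B)) /\
  (forall (G : ctx) (k : sort) (A B : tm),
      sub G Neg A (TAll k B) -> sub (cons (DUniv k) G) Neg (shift A) B).
Proof.
  split.
  - intros G k A B H. remember Pos as p. remember (TEx k A) as X.
    revert k A HeqX. induction H; intros kk AA HX; subst; try discriminate.
    + inversion HX; subst. assumption.
    + specialize (IHsub eq_refl kk AA eq_refl).
      unfold shift at 1; simpl. fold (shift tau).
      apply Sub_ExR with (tau := shift tau).
      * apply sorting_weaken; assumption.
      * rewrite <- shift_open. exact IHsub.
  - intros G k A B H. remember Neg as p. remember (TAll k B) as X.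
    revert k B HeqX. induction H; intros kk BB HX; subst; try discriminate.
    + specialize (IHsub eq_refl kk BB eq_refl).
      unfold shift at 1; simpl.
      apply Sub_AllL with (tau := shift tau).
      * apply sorting_weaken; assumption.
      * rewrite <- shift_open. exact IHsub.
    + inversion HX; subst. assumption.
Qed.
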